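(* Let $(\mathcal{S},\mathcal{A},\tau,\mu_0,\gamma)$ be fixed, and let $\pi$ be any fixed policy. For reward functions $R, R' : \mathcal{S}\times\mathcal{A}\times\mathcal{S}\to\mathbb{R}$, let $Q^\pi_R$ and $Q^\pi_{R'}$ be the $Q$-functions of $\pi$ in the MDPs $(\mathcal{S},\mathcal{A},\tau,\mu_0,R,\gamma)$ and $(\mathcal{S},\mathcal{A},\tau,\mu_0,R',\gamma)$. Then $Q^\pi_R = Q^\pi_{R'}$ if and only if $R'$ is produced from $R$ by $S'$-redistribution. Likewise, the optimal $Q$-functions satisfy $Q^\star_R = Q^\star_{R'}$ if and only if $R'$ is produced from $R$ by $S'$-redistribution.
   Context: An MDP is a tuple $(\mathcal{S},\mathcal{A},\tau,\mu_0,R,\gamma)$ with finite state set $\mathcal{S}$, finite action set $\mathcal{A}$, transition dynamics $\tau:\mathcal{S}\times\mathcal{A}\to\Delta(\mathcal{S})$, initial state distribution $\mu_0\in\Delta(\mathcal{S})$, deterministic reward function $R:\mathcal{S}\times\mathcal{A}\times\mathcal{S}\to\mathbb{R}$, and discount $\gamma\in(0,1)$. A policy is a map $\pi:\mathcal{S}\to\Delta(\mathcal{A})$. The return of a trajectory $(s_0,a_0,s_1,a_1,\dots)$ is $\sum_{t\ge 0}\gamma^t R(s_t,a_t,s_{t+1})$. The value function is $V^\pi(s)=\mathbb{E}[\text{return}]$ of the trajectory started at $s$ with actions drawn from $\pi$ and next states from $\tau$; the $Q$-function $Q^\pi(s,a)$ is the same expectation conditioned on the first action being $a$; equivalently $Q^\pi$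 is the unique solution of $Q^\pi(s,a)=\mathbb{E}_{S'\sim\tau(s,a)}[R(s,a,S')+\gamma V^\pi(S')]$, $V^\pi(s)=\mathbb{E}_{A\sim\pi(s)}[Q^\pi(s,A)]$. The policy evaluation function is $\mathcal{J}(\pi)=\mathbb{E}_{S_0\sim\mu_0}[V^\pi(S_0)]$; an optimal policy maximises $\mathcal{J}$, and $Q^\star$ denotes the (unique) $Q$-function of an optimal policy. Given $\tau$, $R'$ is produced from $R$ by $S'$-redistribution if $\mathbb{E}_{S'\sim\tau(s,a)}[R(s,a,S')]=\mathbb{E}_{S'\sim\tau(s,a)}[R'(s,a,S')]$ for all $s\in\mathcal{S}$, $a\in\mathcal{A}$. *)

(* Defs.v *)
From HB Require Import structures.
From mathcomp Require Import all_boot all_order all_algebra.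
From mathcomp Require Import all_classical all_reals all_analysis.
Set Implicit Arguments. Unset Strict Implicit. Unset Printing Implicit Defensive.
Import Order.TTheory GRing.Theory Num.Theory numFieldNormedType.Exports.
Local Open Scope ring_scope.

Section MDP.
Variables (R : realType) (S A : finType).

Definition is_dist (T : finType) (p : T -> R) : Prop :=
  (forall x, 0 <= p x) /\ \sum_(x : T) p x = 1.

Definition is_policy (pi : S -> A -> R) : Prop := forall s, is_dist (pi s).

Variables (tau : S -> A -> S -> R) (gamma : R).

(* joint distribution of (s_t, a_t) given s_0 = s, a_0 = a, following pi *)
Fixpoint sa_dist (pi : S -> A -> R) (s : S) (a : A) (t : nat) : S -> A -> R :=
  match t with
  | 0%N => fun s1 a1 => if (s1 == s) && (a1 == a) then 1 else 0
  | t'.+1 => fun s2 a2 =>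
      \sum_(s1 : S) \sum_(a1 : A)
        sa_dist pi s a t' s1 a1 * tau s1 a1 s2 * pi s2 a2
  end.

Definition exp_reward (pi : S -> A -> R) (r : S -> A -> S -> R)
    (s : S) (a : A) (t : nat) : R :=
  \sum_(s1 : S) \sum_(a1 : A) \sum_(s2 : S)
    sa_dist pi s a t s1 a1 * tau s1 a1 s2 * r s1 a1 s2.

Definition Qpi (pi : S -> A -> R) (r : S -> A -> S -> R) : S -> A -> R :=
  fun s a => limn (series ((fun t => gamma ^+ t * exp_reward pi r s a t) : R^nat)).

Definition Qstar (r : S -> A -> S -> R) : S -> A -> R :=
  fun s a => sup [set q | exists pi, is_policy pi /\ q = Qpi pi r s a]%classic.

Definition S'_redistribution (r r' : S -> A -> S -> R) : Prop :=
  forall s a, \sum_(s2 : S) tau s a s2 * r s a s2 = \sum_(s2 : S) tau s a s2 * r' s a s2.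

End MDP.

(* Main.v *)
Require Import Defs.
From HB Require Import structures.
From mathcomp Require Import all_boot all_order all_algebra.
From mathcomp Require Import all_classical all_reals all_analysis.
From mathcomp Require Import ring lra.
Import Order.TTheory GRing.Theory Num.Theory numFieldNormedType.Exports.
Local Open Scope classical_set_scope.
Local Open Scope ring_scope.

Section Proofs.
Variables (R : realType) (S A : finType) (tau : S -> A -> S -> R) (gamma : R).

Definition Vf (pi : S -> A -> R) (f : S -> A -> R) (s : S) : R := \sum_a pi s a * f s a.
Definition Pf (pi : S -> A -> R) (f : S -> A -> R) : S -> A -> R :=
  fun s a => \sum_s2 tau s a s2 * Vf pi f s2.
Definition Ef (pi : S -> A -> R) (t : nat) (f : S -> A -> R) : S -> A -> R :=
  fun s a => \sum_s1 \sum_a1 sa_dist tau pi s a t s1 a1 * f s1 a1.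
Definition rbar (r : S -> A -> S -> R) : S -> A -> R :=
  fun s a => \sum_s2 tau s a s2 * r s a s2.

Lemma exp_rewardE pi r s a t : exp_reward tau pi r s a t = Ef pi t (rbar r) s a.
Proof.
rewrite /exp_reward /Ef /rbar; apply: eq_bigr => s1 _; apply: eq_bigr => a1 _.
by rewrite big_distrr /=; apply: eq_bigr => s2 _; rewrite mulrA.
Qed.

Lemma E0 pi f : Ef pi 0 f = f.
Proof.
apply/funext=> s; apply/funext => a; rewrite /Ef /=.
rewrite (bigD1 s) //= [X in _ + X]big1 ?addr0; last first.
  by move=> s1 /= /negbTE hs; rewrite big1 // => a1 _; rewrite hs /= mul0r.
rewrite (bigD1 a) //= [X in _ + X]big1 ?addr0; last first.
  by move=> a1 /= /negbTE ->; rewrite andbF mul0r.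
by rewrite !eqxx mul1r.
Qed.

Lemma Estep pi t f : Ef pi t.+1 f = Ef pi t (Pf pi f).
Proof.
apply/funext=> s; apply/funext => a; rewrite /Ef /Pf /Vf /=.
transitivity (\sum_s1 \sum_a1 \sum_s2 \sum_a2
   sa_dist tau pi s a t s1 a1 * tau s1 a1 s2 * pi s2 a2 * f s2 a2).
  under eq_bigr do under eq_bigr do rewrite big_distrl /=.
  under eq_bigr do under eq_bigr do under eq_bigr do rewrite big_distrl /=.
  under eq_bigr do rewrite exchange_big /=.
  under eq_bigr do under eq_bigr do rewrite exchange_big /=.
  rewrite exchange_big /=.
  by under eq_bigr do rewrite exchange_big /=.
apply: eq_bigr => s1 _; apply: eq_bigr => a1 _.
rewrite big_distrr /=; apply: eq_bigr => s2 _.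
rewrite big_distrr big_distrr /=; apply: eq_bigr => a2 _.
by rewrite !mulrA.
Qed.


Hypothesis htau : forall s a, is_dist (tau s a).

Lemma V_mono pi f g : is_policy pi -> (forall s a, f s a <= g s a) ->
  forall s, Vf pi f s <= Vf pi g s.
Proof.
move=> hp hfg s; apply: ler_sum => a _; apply: ler_wpM2l => //.
exact: (hp s).1.
Qed.

Lemma V_cst pi c : is_policy pi -> forall s, Vf pi (fun _ _ => c) s = c.
Proof. by move=> hp s; rewrite /Vf -big_distrl /= (hp s).2 mul1r. Qed.

Lemma P_mono pi f g : is_policy pi -> (forall s a, f s a <= g s a) ->
  forall s a, Pf pi f s a <= Pf pi g s a.
Proof.
move=> hp hfg s a; apply: ler_sum => s2 _; apply: ler_wpM2l.
  exact: (htau s a).1.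
exact: V_mono.
Qed.

Lemma P_cst pi c : is_policy pi -> forall s a, Pf pi (fun _ _ => c) s a = c.
Proof.
move=> hp s a; rewrite /Pf; under eq_bigr do rewrite V_cst //.
by rewrite -big_distrl /= (htau s a).2 mul1r.
Qed.

Lemma P_lin pi (I : Type) (r : seq I) (c : I -> R) (h : I -> S -> A -> R) s a :
  Pf pi (fun s a => \sum_(k <- r) c k * h k s a) s a =
  \sum_(k <- r) c k * Pf pi (h k) s a.
Proof.
rewrite /Pf /Vf.
transitivity (\sum_s2 \sum_a2 \sum_(k <- r) c k * (tau s a s2 * (pi s2 a2 * h k s2 a2))).
  apply: eq_bigr => s2 _; rewrite big_distrr /=; apply: eq_bigr => a2 _.
  rewrite big_distrr big_distrr /=; apply: eq_bigr => k _.
  by ring.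
under eq_bigr do rewrite exchange_big /=.
rewrite exchange_big /=; apply: eq_bigr => k _.
rewrite big_distrr /=; apply: eq_bigr => s2 _.
by rewrite big_distrr big_distrr.
Qed.

Lemma E_comm pi t f : Ef pi t (Pf pi f) = Pf pi (Ef pi t f).
Proof.
elim: t f => [|t IH] f; first by rewrite !E0.
by rewrite Estep IH -Estep.
Qed.

Lemma E_bound pi t f B : is_policy pi -> (forall s a, `|f s a| <= B) ->
  forall s a, `|Ef pi t f s a| <= B.
Proof.
move=> hp; elim: t f => [|t IH] f hf s a; first by rewrite E0.
rewrite Estep; apply: IH => s1 a1.
have hfl : forall s a, - B <= f s a by move=> s2 a2; have := hf s2 a2; rewrite ler_norml => /andP[].
have hfr : forall s a, f s a <= B by move=> s2 a2; have := hf s2 a2; rewrite ler_norml => /andP[].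
rewrite ler_norml; apply/andP; split.
  by rewrite -[X in X <= _](P_cst pi (- B) hp s1 a1); apply: P_mono.
by rewrite -[X in _ <= X](P_cst pi B hp s1 a1); apply: P_mono.
Qed.


Definition Qf pi f : S -> A -> R :=
  fun s a => limn (series ((fun t => gamma ^+ t * Ef pi t f s a) : R^nat)).

Lemma QpiE pi r : Qpi tau gamma pi r = Qf pi (rbar r).
Proof.
apply/funext=> s; apply/funext=> a; rewrite /Qpi /Qf.
by congr (limn (series _)); apply/funext => t; rewrite exp_rewardE.
Qed.

Hypothesis hg : 0 <= gamma < 1.

Lemma Q_cvg pi f s a : is_policy pi ->
  cvgn (series ((fun t => gamma ^+ t * Ef pi t f s a) : R^nat)).
Proof.
move=> hp; set B := \sum_s1 \sum_a1 `|f s1 a1|.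
have hB : forall s a, `|f s a| <= B.
  move=> s1 a1; rewrite /B (bigD1 s1) //= (bigD1 a1) //= -addrA lerDl.
  by rewrite addr_ge0 // sumr_ge0 // => *; rewrite sumr_ge0.
have B0 : 0 <= B by apply: le_trans (hB s a).
case/andP: hg => g0 g1.
apply: normed_cvg.
apply: (@series_le_cvg _ _ (geometric B gamma)).
- by move=> n; rewrite normr_ge0.
- by move=> n; apply: geometric_ge0.
- move=> n /=; rewrite normrM normrX ger0_norm // mulrC.
  by apply: ler_wpM2r; [exact: exprn_ge0 | exact: E_bound].
- by apply: is_cvg_geometric_series; rewrite ger0_norm.
Qed.

Lemma cvg_sumR (I : Type) (r : seq I) (u : I -> nat -> R) (l : I -> R) :
  (forall i, u i n @[n --> \oo] --> l i) ->
  (\sum_(i <- r) u i n) @[n --> \oo] --> \sum_(i <- r) l i.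
Proof.
move=> hu; elim: r => [|i r IH].
  have -> : (fun n => \sum_(i <- [::]) u i n) = fun=> 0 by apply/funext => n; rewrite big_nil.
  by rewrite big_nil; apply: cvg_cst.
have -> : (fun n => \sum_(j <- i :: r) u j n) = (fun n => u i n + \sum_(j <- r) u j n).
  by apply/funext => n; rewrite big_cons.
by rewrite big_cons; apply: cvgD.
Qed.

Lemma Bellman pi f : is_policy pi ->
  forall s a, Qf pi f s a = f s a + gamma * Pf pi (Qf pi f) s a.
Proof.
move=> hp s a.
pose Sn s a n := series ((fun t => gamma ^+ t * Ef pi t f s a) : R^nat) n.
have key : forall n, Sn s a n.+1 = f s a + gamma * Pf pi (fun s a => Sn s a n) s a.
  move=> n; rewrite /Sn /series /= big_nat_recl // expr0 mul1r E0.
  congr (_ + _); rewrite P_lin big_distrr /=; apply: eq_bigr => k _.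
  by rewrite Estep E_comm exprS mulrA.
have h1 : Sn s a n.+1 @[n --> \oo] --> Qf pi f s a.
  rewrite (cvg_shiftS (Sn s a)); exact: Q_cvg.
have h2 : (f s a + gamma * Pf pi (fun s a => Sn s a n) s a) @[n --> \oo] -->
     f s a + gamma * Pf pi (Qf pi f) s a.
  apply: cvgD; first exact: cvg_cst.
  apply: cvgM; first exact: cvg_cst.
  rewrite /Pf; apply: cvg_sumR => s2; apply: cvgM; first exact: cvg_cst.
  rewrite /Vf; apply: cvg_sumR => a2; apply: cvgM; first exact: cvg_cst.
  exact: Q_cvg.
have e : (fun n => Sn s a n.+1) = (fun n => f s a + gamma * Pf pi (fun s a => Sn s a n) s a).
  by apply/funext => n; rewrite key.
rewrite e in h1.
exact: (cvg_unique _ h1 h2).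
Qed.


Lemma max_principle pi x : is_policy pi ->
  (forall s a, x s a <= gamma * Pf pi x s a) -> forall s a, x s a <= 0.
Proof.
move=> hp hx s a.
have [[s0 a0] _ hmax] := @arg_maxP _ _ (S * A)%type (s, a) xpredT (fun p => x p.1 p.2) isT.
have hM : forall s a, x s a <= x s0 a0 by move=> s1 a1; exact: (hmax (s1, a1)).
have hP : Pf pi x s0 a0 <= x s0 a0.
  by rewrite -[X in _ <= X](P_cst pi (x s0 a0) hp s0 a0); apply: P_mono.
have h1 : x s0 a0 <= gamma * x s0 a0.
  apply: le_trans (hx s0 a0) _; apply: ler_wpM2l => //; by case/andP: hg.
have h2 : x s0 a0 <= 0 by case/andP: hg => g0 g1; nra.
exact: le_trans (hM s a) h2.
Qed.

Lemma P_sub pi f g s a :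
  Pf pi (fun s a => f s a - g s a) s a = Pf pi f s a - Pf pi g s a.
Proof.
rewrite /Pf /Vf -sumrB; apply: eq_bigr => s2 _; rewrite -mulrBr -sumrB.
by congr (_ * _); apply: eq_bigr => a2 _; rewrite mulrBr.
Qed.

Lemma cmpA pi1 pi2 c Q1 Q2 : is_policy pi1 ->
  (forall s a, Q1 s a = c s a + gamma * Pf pi1 Q1 s a) ->
  (forall s a, Q2 s a = c s a + gamma * Pf pi2 Q2 s a) ->
  (forall s a, Pf pi1 Q2 s a <= Pf pi2 Q2 s a) ->
  forall s a, Q1 s a <= Q2 s a.
Proof.
move=> hp h1 h2 hle s a; rewrite -subr_le0.
apply: (@max_principle pi1 (fun s a => Q1 s a - Q2 s a) hp) => s1 a1.
rewrite P_sub {1}h1 {1}h2; have := hle s1 a1; case/andP: hg => g0 _; nra.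
Qed.

Lemma cmpB pi1 pi2 c Q1 Q2 : is_policy pi2 ->
  (forall s a, Q1 s a = c s a + gamma * Pf pi1 Q1 s a) ->
  (forall s a, Q2 s a = c s a + gamma * Pf pi2 Q2 s a) ->
  (forall s a, Pf pi1 Q1 s a <= Pf pi2 Q1 s a) ->
  forall s a, Q1 s a <= Q2 s a.
Proof.
move=> hp h1 h2 hle s a; rewrite -subr_le0.
apply: (@max_principle pi2 (fun s a => Q1 s a - Q2 s a) hp) => s1 a1.
rewrite P_sub {1}h1 {1}h2; have := hle s1 a1; case/andP: hg => g0 _; nra.
Qed.

Definition pid (d : S -> A) : S -> A -> R := fun s a => if a == d s then 1 else 0.

Lemma V_pid d f s : Vf (pid d) f s = f s (d s).
Proof.
rewrite /Vf /pid (bigD1 (d s)) //= eqxx mul1r big1 ?addr0 //.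
by move=> a /negbTE ->; rewrite mul0r.
Qed.

Lemma pid_policy d : is_policy (pid d).
Proof.
move=> s; split; first by move=> a; rewrite /pid; case: eqP.
have := V_pid d (fun _ _ => 1) s; rewrite /Vf.
by under eq_bigr do rewrite mulr1.
Qed.

Lemma P_le pi pi' f : (forall s, Vf pi f s <= Vf pi' f s) ->
  forall s a, Pf pi f s a <= Pf pi' f s a.
Proof.
move=> h s a; apply: ler_sum => s2 _; apply: ler_wpM2l => //; exact: (htau s a).1.
Qed.

Lemma V_le pi f d : is_policy pi -> (forall s a, f s a <= f s (d s)) ->
  forall s, Vf pi f s <= Vf (pid d) f s.
Proof.
move=> hp h s; rewrite V_pid /Vf.
rewrite -[X in _ <= X]mul1r -(hp s).2 big_distrl /=.
by apply: ler_sum => a _; apply: ler_wpM2l => //; exact: (hp s).1.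
Qed.

Lemma opt_exists c (a0 : A) : exists d : S -> A,
  (forall s a, Qf (pid d) c s a <= Qf (pid d) c s (d s)) /\
  (forall pi, is_policy pi -> forall s a, Qf pi c s a <= Qf (pid d) c s a).
Proof.
pose Phi (d : {ffun S -> A}) := \sum_s Qf (pid d) c s (d s).
have [d _ hd] := @arg_maxP _ _ {ffun S -> A} [ffun=> a0] xpredT Phi isT.
have greedy : forall s a, Qf (pid d) c s a <= Qf (pid d) c s (d s).
  move=> s a; rewrite leNgt; apply/negP => hlt.
  pose Q := Qf (pid d) c.
  pose d' : {ffun S -> A} := [ffun s => [arg max_(a > d s) Q s a]%O].
  have hd' : forall s a, Q s a <= Q s (d' s).
    move=> s1 a1; rewrite ffunE; case: arg_maxP => //= a2 _ h; exact: h.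
  have imp : forall s a, Q s a <= Qf (pid d') c s a.
    apply: (@cmpB (pid d) (pid d') c) => //.
    - exact: pid_policy.
    - exact: Bellman (pid_policy d).
    - exact: Bellman (pid_policy d').
    - by apply: P_le => s2; rewrite !V_pid.
  have : Phi d < Phi d'.
    rewrite /Phi (bigD1 s) //= [X in _ < X](bigD1 s) //=.
    apply: ltr_leD.
      by apply: (lt_le_trans hlt); apply: le_trans (hd' s a) (imp _ _).
    by apply: ler_sum => s1 _; apply: le_trans (hd' s1 (d s1)) (imp _ _).
  by move/lt_geF; have := hd d' isT; rewrite /= => ->.
exists d; split => // pi hp.
apply: (@cmpA pi (pid d) c) => //.
- exact: Bellman.
- exact: Bellman (pid_policy d).
- by apply: P_le => s2; apply: V_le.
Qed.


Lemma QstarE r d :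
  (forall pi, is_policy pi -> forall s a, Qf pi (rbar r) s a <= Qf (pid d) (rbar r) s a) ->
  Qstar tau gamma r = Qpi tau gamma (pid d) r.
Proof.
move=> hdom; apply/funext=> s; apply/funext=> a; rewrite /Qstar.
set E := [set q | _].
have Ed : E (Qpi tau gamma (pid d) r s a) by exists (pid d); split => //; exact: pid_policy.
have ub : ubound E (Qpi tau gamma (pid d) r s a).
  by move=> q [pi [hp ->]]; rewrite !QpiE; exact: hdom.
apply/le_anti/andP; split.
  by apply: ge_sup => //; exists (Qpi tau gamma (pid d) r s a).
apply: sup_upper_bound => //; split; first by exists (Qpi tau gamma (pid d) r s a).
by exists (Qpi tau gamma (pid d) r s a).
Qed.

End Proofs.

Arguments rbar {R S A}. Arguments Pf {R S A}. Arguments Qf {R S A}.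
Arguments pid {R S A}. Arguments Vf {R S A}. Arguments QpiE {R S A}.
Arguments Bellman {R S A tau gamma} _ _ {_} _ _ _ _.
Arguments opt_exists {R S A tau gamma}.
Arguments QstarE {R S A tau gamma r d}.
Arguments pid_policy {R S A}. Arguments V_pid {R S A}.

Theorem theorem3p1 (R : realType) (S A : finType)
    (tau : S -> A -> S -> R) (mu0 : S -> R) (gamma : R)
    (htau : forall s a, is_dist (tau s a)) (hmu0 : is_dist mu0)
    (hgamma : 0 < gamma < 1)
    (r r' : S -> A -> S -> R) :
  (forall pi : S -> A -> R, is_policy pi ->
     (Qpi tau gamma pi r = Qpi tau gamma pi r' <-> S'_redistribution tau r r'))
  /\
  (Qstar tau gamma r = Qstar tau gamma r' <-> S'_redistribution tau r r').
Proof.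
have hg : 0 <= gamma < 1 by case/andP: hgamma => g0 g1; rewrite ltW.
have redist_eq : S'_redistribution tau r r' <-> rbar tau r = rbar tau r'.
  split=> [h|h s a]; first by apply/funext=> s; apply/funext=> a; exact: h.
  by have := congr1 (fun g => g s a) h.
split.
  move=> pi hp; split.
    rewrite !QpiE => hQ; apply/redist_eq; apply/funext=> s; apply/funext=> a.
    have e1 := Bellman htau hg (rbar tau r) hp s a.
    have e2 := Bellman htau hg (rbar tau r') hp s a.
    rewrite hQ in e1.
    by apply: (addIr (gamma * Pf tau pi (Qf tau gamma pi (rbar tau r')) s a)); rewrite -e1 -e2.
  by move/redist_eq => h; rewrite !QpiE h.
split; last first.
  move/redist_eq => h; rewrite /Qstar; apply/funext=> s; apply/funext=> a.
  congr sup; apply/seteqP; split=> q [pi [hp ->]]; exists pi; split => //;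
    by rewrite !QpiE h.
move=> hQ; case: (pickP (fun _ : A => true)) => [a0 _ | hA]; last first.
  by move=> s a; have := hA a.
have [d [gd dd]] := opt_exists htau hg (rbar tau r) a0.
have [d' [gd' dd']] := opt_exists htau hg (rbar tau r') a0.
rewrite (QstarE dd) (QstarE dd') !QpiE in hQ.
apply/redist_eq; apply/funext=> s; apply/funext=> a.
have e1 := Bellman htau hg (rbar tau r) (pid_policy d) s a.
have e2 := Bellman htau hg (rbar tau r') (pid_policy d') s a.
rewrite hQ in e1 gd.
set Q := Qf tau gamma (pid d') (rbar tau r') in e1 e2 gd gd'.
have eP : Pf tau (pid d) Q s a = Pf tau (pid d') Q s a.
  rewrite /Pf; apply: eq_bigr => s2 _; rewrite !V_pid; congr (_ * _).
  by apply/le_anti; rewrite gd gd'.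
by apply: (addIr (gamma * Pf tau (pid d') Q s a)); rewrite -e2 -eP -e1.
Qed.
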